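(* Let $(A,B)$ be an $n\times n$ definite pencil and suppose $U\in\mathbb{C}^{n\times k}$ has orthonormal columns spanning a right deflating subspace of $(A,B)$. For any $\epsilon>0$ and any $0<\epsilon'\le\epsilon\left(1+\frac{\|(A,B)\|_2}{\gamma(A,B)}\right)^{-1}$ we have $$\Lambda^{\mathrm{sym}}_{\epsilon'}(U^HAU,U^HBU)\subseteq\Lambda^{\mathrm{sym}}_\epsilon(A,B).$$
   Context: A pencil $(A,B)$ of $n\times n$ complex matrices is definite if $A,B$ are Hermitian and $\gamma(A,B)=\min_{\|x\|_2=1}|x^H(A+iB)x|>0$. A $k$-dimensional subspace $\mathcal X\subseteq\mathbb{C}^n$ is a right deflating subspace of $(A,B)$ if $\dim(A\mathcal X+B\mathcal X)\le k$ (for a definite pencil, equivalently, $\mathcal X$ is spanned by $k$ columns of a nonsingular $X$ with $X^HAX$ and $X^HBX$ diagonal). $\|(A,B)\|_2$ is the spectral norm of the $n\times2n$ matrix $[A,\ B]$. For Hermitian $A,B$ (of any size) and $\delta>0$, $\Lambda^{\mathrm{sym}}_\delta(A,B)=\{z\in\mathbb{C}:(A+E)u=z(B+F)u$ for some $u\ne0$ and Hermitian $E,F$ with $\sqrt{\|E\|_2^2+\|F\|_2^2}\le\delta\}$. *)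

(* Defs.v *)
From HB Require Import structures.
From mathcomp Require Import all_boot all_order all_algebra.
From mathcomp Require Import complex.
From mathcomp Require Import boolp classical_sets reals.
Set Implicit Arguments. Unset Strict Implicit. Unset Printing Implicit Defensive.
Import Order.TTheory GRing.Theory Num.Theory.
Local Open Scope ring_scope.
Local Open Scope classical_set_scope.

Section Defs.
Variable R : realType.
Local Notation C := (R[i]).

Definition iC : C := Complex 0 1.

Definition ctr {m p : nat} (M : 'M[C]_(m, p)) : 'M[C]_(p, m) := map_mx (@conjc R) M^T.

Definition hermitian {m : nat} (A : 'M[C]_m) : Prop := ctr A = A.

Definition vnorm {m : nat} (x : 'cV[C]_m) : R :=
  Num.sqrt (\sum_i (Normc.normc (x i 0)) ^+ 2).

Definition specnorm {m p : nat} (M : 'M[C]_(m, p)) : R :=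
  sup [set vnorm (M *m x) | x in [set x : 'cV[C]_p | vnorm x = 1]].

Definition pencil_norm {n : nat} (A B : 'M[C]_n) : R := specnorm (row_mx A B).

Definition crawford {n : nat} (A B : 'M[C]_n) : R :=
  inf [set Normc.normc ((ctr x *m (A + iC *: B) *m x) 0 0) | x in [set x : 'cV[C]_n | vnorm x = 1]].

Definition definite_pencil {n : nat} (A B : 'M[C]_n) : Prop :=
  [/\ hermitian A, hermitian B & 0 < crawford A B].

(* the column space X of U is a right deflating subspace of (A,B):
   dim (A X + B X) <= dim X; A X + B X is the column space of [A U, B U]. *)
Definition right_deflating_span {n k : nat} (A B : 'M[C]_n) (U : 'M[C]_(n, k)) : Prop :=
  (\rank (row_mx (A *m U) (B *m U)) <= \rank U)%N.

Definition sym_pseudospec {m : nat} (delta : R) (A B : 'M[C]_m) : set C :=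
  [set z | exists (u : 'cV[C]_m) (E F : 'M[C]_m),
     [/\ u != 0, hermitian E, hermitian F,
         Num.sqrt (specnorm E ^+ 2 + specnorm F ^+ 2) <= delta &
         (A + E) *m u = z *: ((B + F) *m u)]].

End Defs.

(* Main.v *)
Require Import Defs.
From HB Require Import structures.
From mathcomp Require Import all_boot all_order all_algebra.
From mathcomp Require Import complex.
From mathcomp Require Import boolp classical_sets reals.
From mathcomp Require Import ring lra.
Import Order.TTheory GRing.Theory Num.Theory.
Local Open Scope ring_scope.
Local Open Scope classical_set_scope.

Module PencilAux.
Set Implicit Arguments. Unset Strict Implicit. Unset Printing Implicit Defensive.
Local Open Scope complex_scope.

Section Lib1.
Variable R : realType.
Local Notation C := (R[i]).
Local Notation nc := (@Normc.normc R).

Lemma nc_ge0 (z : C) : 0 <= nc z.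
Proof. by case: z => a b; rewrite /Normc.normc sqrtr_ge0. Qed.

Lemma nc_sqr (z : C) : ((nc z) ^+ 2)%:C = z * conjc z.
Proof.
case: z => a b; rewrite /Normc.normc sqr_sqrtr ?addr_ge0 ?sqr_ge0 //.
simpc; apply/eqP; rewrite eq_complex /=; apply/andP; split; apply/eqP; ring.
Qed.

Lemma conjcK' (z : C) : conjc (conjc z) = z.
Proof. by case: z => a b; simpc. Qed.

Definition dot {n} (x y : 'cV[C]_n) : C := \sum_i conjc (x i 0) * y i 0.

Lemma dotE n (x y : 'cV[C]_n) : (ctr x *m y) 0 0 = dot x y.
Proof. by rewrite mxE; apply: eq_bigr => i _; rewrite !mxE. Qed.

Lemma vnorm_ge0 n (x : 'cV[C]_n) : 0 <= vnorm x.
Proof. exact: sqrtr_ge0. Qed.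

Lemma vnorm_sqr n (x : 'cV[C]_n) : vnorm x ^+ 2 = \sum_i nc (x i 0) ^+ 2.
Proof. by rewrite /vnorm sqr_sqrtr // sumr_ge0 // => i _; rewrite sqr_ge0. Qed.

Lemma dot_self n (x : 'cV[C]_n) : dot x x = (vnorm x ^+ 2)%:C.
Proof.
rewrite vnorm_sqr rmorph_sum; apply: eq_bigr => i _.
by rewrite /= nc_sqr mulrC.
Qed.

Lemma vnorm_eq0 n (x : 'cV[C]_n) : vnorm x = 0 -> x = 0.
Proof.
move=> h; have : vnorm x ^+ 2 = 0 by rewrite h expr0n.
rewrite vnorm_sqr => /eqP; rewrite psumr_eq0 => [/allP H|i _]; last exact: sqr_ge0.
apply/matrixP => i j; rewrite (ord1 j) mxE.
have /H : i \in index_enum 'I_n by rewrite mem_index_enum.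
by rewrite /= expf_eq0 /= => /eqP /Normc.eq0_normc.
Qed.

Lemma vnorm0 n : vnorm (0 : 'cV[C]_n) = 0.
Proof.
rewrite /vnorm (eq_bigr (fun _ => 0)) ?big1 ?sqrtr0 // => i _.
by rewrite mxE Normc.normc0 expr0n.
Qed.

Lemma vnormZ n (a : C) (x : 'cV[C]_n) : vnorm (a *: x) = nc a * vnorm x.
Proof.
rewrite /vnorm (eq_bigr (fun i => nc a ^+ 2 * nc (x i 0) ^+ 2)); last first.
  by move=> i _; rewrite mxE Normc.normcM exprMn.
by rewrite -mulr_sumr sqrtrM ?sqr_ge0 // sqrtr_sqr ger0_norm ?nc_ge0.
Qed.

Lemma vnormN n (x : 'cV[C]_n) : vnorm (- x) = vnorm x.
Proof.
rewrite -scaleN1r vnormZ.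
have -> : nc (-1) = 1 by rewrite normcN Normc.normc1.
by rewrite mul1r.
Qed.

Lemma dotDl n (x y z : 'cV[C]_n) : dot (x + y) z = dot x z + dot y z.
Proof. by rewrite /dot -big_split; apply: eq_bigr => i _; rewrite mxE rmorphD mulrDl. Qed.

Lemma dotDr n (x y z : 'cV[C]_n) : dot z (x + y) = dot z x + dot z y.
Proof. by rewrite /dot -big_split; apply: eq_bigr => i _; rewrite mxE mulrDr. Qed.

Lemma dotZl n a (x z : 'cV[C]_n) : dot (a *: x) z = conjc a * dot x z.
Proof. by rewrite /dot mulr_sumr; apply: eq_bigr => i _; rewrite mxE rmorphM mulrA. Qed.

Lemma dotZr n a (x z : 'cV[C]_n) : dot z (a *: x) = a * dot z x.
Proof. by rewrite /dot mulr_sumr; apply: eq_bigr => i _; rewrite mxE mulrCA. Qed.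

Lemma dotC n (x y : 'cV[C]_n) : dot y x = conjc (dot x y).
Proof.
rewrite /dot rmorph_sum; apply: eq_bigr => i _.
rewrite rmorphM /= conjcK' mulrC. done.
Qed.

Lemma dotNl n (x z : 'cV[C]_n) : dot (- x) z = - dot x z.
Proof. by rewrite -scaleN1r dotZl rmorphN rmorph1 mulN1r. Qed.
Lemma dotNr n (x z : 'cV[C]_n) : dot z (- x) = - dot z x.
Proof. by rewrite -scaleN1r dotZr mulN1r. Qed.
Lemma dotBl n (x y z : 'cV[C]_n) : dot (x - y) z = dot x z - dot y z.
Proof. by rewrite dotDl dotNl. Qed.
Lemma dotBr n (x y z : 'cV[C]_n) : dot z (x - y) = dot z x - dot z y.
Proof. by rewrite dotDr dotNr. Qed.

Lemma ctr_mul m p q (M : 'M[C]_(m, p)) (N : 'M[C]_(p, q)) :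
  ctr (M *m N) = ctr N *m ctr M.
Proof.
apply/matrixP => i j; rewrite !mxE rmorph_sum; apply: eq_bigr => l _.
by rewrite !mxE rmorphM mulrC.
Qed.

Lemma ctrK m p (M : 'M[C]_(m, p)) : ctr (ctr M) = M.
Proof. by apply/matrixP => i j; rewrite !mxE conjcK'. Qed.

Lemma ctrD m p (M N : 'M[C]_(m, p)) : ctr (M + N) = ctr M + ctr N.
Proof. by apply/matrixP => i j; rewrite !mxE rmorphD. Qed.

Lemma ctrZ m p a (M : 'M[C]_(m, p)) : ctr (a *: M) = conjc a *: ctr M.
Proof. by apply/matrixP => i j; rewrite !mxE rmorphM. Qed.

Lemma ctrN m p (M : 'M[C]_(m, p)) : ctr (- M) = - ctr M.
Proof. by apply/matrixP => i j; rewrite !mxE rmorphN. Qed.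

Lemma dot_mulmx n m (M : 'M[C]_(n, m)) x y : dot x (M *m y) = dot (ctr M *m x) y.
Proof.
rewrite -!dotE ctr_mul ctrK; by rewrite mulmxA.
Qed.

End Lib1.


Section Lib2.
Variable R : realType.
Local Notation C := (R[i]).
Local Notation nc := (@Normc.normc R).
Local Notation re := (@complex.Re R).

Lemma conjcM (x y : C) : conjc (x * y) = conjc x * conjc y.
Proof. by case: x => a b; case: y => c d; simpc; apply/eqP; rewrite eq_complex /=; apply/andP; split; apply/eqP; ring. Qed.
Lemma conjcR (a : R) : conjc (a%:C) = a%:C.
Proof. by rewrite /conjc /= oppr0. Qed.

Lemma realC_inj (a b : R) : a%:C = b%:C -> a = b.
Proof. by case. Qed.

Lemma CS n (x y : 'cV[C]_n) : nc (dot x y) <= vnorm x * vnorm y.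
Proof.
have [y0|ny0] := eqVneq (vnorm y) 0.
  move/vnorm_eq0: y0 => ->; rewrite vnorm0 mulr0 /dot big1 ?Normc.normc0 // => i _.
  by rewrite mxE mulr0.
set s := dot x y; set N := vnorm y ^+ 2.
have Npos : 0 < N by rewrite exprn_gt0 // lt_neqAle eq_sym ny0 vnorm_ge0.
have NC0 : N%:C != 0 by rewrite eq_complex /= negb_and gt_eqF.
set a := conjc s * (N^-1)%:C.
have hN : (N^-1)%:C * N%:C = 1 by rewrite -rmorphM /= mulVf ?gt_eqF.
have key : (vnorm (x - a *: y) ^+ 2)%:C = (vnorm x ^+ 2 - nc s ^+ 2 / N)%:C.
  have e1 : (nc s ^+ 2 / N)%:C = s * conjc s * (N^-1)%:C by rewrite rmorphM /= nc_sqr.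
  have e2 : conjc a = s * (N^-1)%:C by rewrite /a conjcM conjcK' conjcR.
  rewrite -dot_self dotBl !dotBr !dotZl !dotZr !dot_self -/N -/s (dotC x y) -/s.
  have e3 : conjc s * (N^-1)%:C * N%:C = conjc s by rewrite -mulrA hN mulr1.
  rewrite rmorphB /= e1 e2 /a e3; ring.
have /realC_inj h := key.
have : 0 <= vnorm x ^+ 2 - nc s ^+ 2 / N by rewrite -h sqr_ge0.
rewrite subr_ge0 ler_pdivrMr // /N -exprMn => H.
by rewrite -(ler_pXn2r (n:=2)) // ?nnegrE ?mulr_ge0 ?vnorm_ge0 ?nc_ge0.
Qed.

Lemma Re_dot_le n (x y : 'cV[C]_n) : re (dot x y) <= vnorm x * vnorm y.
Proof.
apply: le_trans (CS x y); case: (dot x y) => a b /=.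
rewrite /Normc.normc; apply: le_trans (ler_norm a) _.
by rewrite -sqrtr_sqr ler_wsqrtr // lerDl sqr_ge0.
Qed.

Lemma vnormD n (x y : 'cV[C]_n) : vnorm (x + y) <= vnorm x + vnorm y.
Proof.
have h : (vnorm (x + y) ^+ 2)%:C = (vnorm x ^+ 2 + vnorm y ^+ 2 + 2 * re (dot x y))%:C.
  rewrite -dot_self dotDl !dotDr !dot_self (dotC x y).
  case: (dot x y) => a b; simpc; rewrite /=.
  apply/eqP; rewrite eq_complex /=; apply/andP; split; apply/eqP; ring.
have /realC_inj h' := h.
rewrite -(ler_pXn2r (n:=2)) ?nnegrE ?addr_ge0 ?vnorm_ge0 // h' sqrrD.
have := Re_dot_le x y; nra.
Qed.

Lemma vnormB n (x y : 'cV[C]_n) : vnorm (x - y) <= vnorm x + vnorm y.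
Proof. by rewrite -(vnormN y); exact: vnormD. Qed.

End Lib2.


Section Lib3.
Variable R : realType.
Local Notation C := (R[i]).
Local Notation nc := (@Normc.normc R).
Local Notation re := (@complex.Re R).

Lemma ncR (a : R) : nc a%:C = `|a|.
Proof. by rewrite /Normc.normc /= expr0n /= addr0 sqrtr_sqr. Qed.

Lemma normalize n (x : 'cV[C]_n) : x != 0 ->
  vnorm ((vnorm x)^-1%:C *: x) = 1 /\ x = (vnorm x)%:C *: ((vnorm x)^-1%:C *: x).
Proof.
move=> nx0; have vx0 : vnorm x != 0 by apply: contra nx0 => /eqP /vnorm_eq0 ->.
have vxp : 0 < vnorm x by rewrite lt_neqAle eq_sym vx0 vnorm_ge0.
split; first by rewrite vnormZ ncR ger0_norm ?invr_ge0 ?vnorm_ge0 // mulVf.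
by rewrite scalerA -rmorphM /= mulfV // scale1r.
Qed.

Definition frob m p (M : 'M[C]_(m, p)) : R :=
  Num.sqrt (\sum_i vnorm (ctr (row i M)) ^+ 2).

Lemma frob_ge0 m p (M : 'M[C]_(m, p)) : 0 <= frob M.
Proof. exact: sqrtr_ge0. Qed.

Lemma mulmx_row_dot m p (M : 'M[C]_(m, p)) x i :
  (M *m x) i 0 = dot (ctr (row i M)) x.
Proof. by rewrite mxE /dot; apply: eq_bigr => j _; rewrite !mxE conjcK'. Qed.

Lemma frob_bound m p (M : 'M[C]_(m, p)) x : vnorm (M *m x) <= frob M * vnorm x.
Proof.
rewrite -(ler_pXn2r (n:=2)) ?nnegrE ?mulr_ge0 ?vnorm_ge0 ?frob_ge0 //.
rewrite exprMn.
have -> : frob M ^+ 2 = \sum_i vnorm (ctr (row i M)) ^+ 2.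
  by rewrite /frob sqr_sqrtr // sumr_ge0 // => i _; exact: sqr_ge0.
rewrite (vnorm_sqr (M *m x)) mulr_suml; apply: ler_sum => i _.
rewrite mulmx_row_dot -exprMn ler_pXn2r ?nnegrE ?mulr_ge0 ?vnorm_ge0 ?nc_ge0 //.
exact: CS.
Qed.

Definition unitS p := [set x : 'cV[C]_p | vnorm x = 1].
Arguments unitS : clear implicits.
Definition Sset m p (M : 'M[C]_(m, p)) := [set vnorm (M *m x) | x in unitS p].

Lemma Sset_ub m p (M : 'M[C]_(m, p)) : has_ubound (Sset M).
Proof.
exists (frob M) => _ [x /= ux <-]; apply: le_trans (frob_bound M x) _.
by rewrite ux mulr1.
Qed.

Lemma specnorm_ge0 m p (M : 'M[C]_(m, p)) : 0 <= specnorm M.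
Proof.
rewrite /specnorm -/(unitS p) -/(Sset M).
have [[y [x ux _]]|e] := pselect (Sset M !=set0).
  apply: le_trans (vnorm_ge0 (M *m x)) _.
  by apply: (ub_le_sup (Sset_ub M)); exists x.
have -> : Sset M = set0 by apply/eqP/negPn/negP => h; apply: e; exact/set0P.
by rewrite sup0.
Qed.

Lemma specnorm_ub m p (M : 'M[C]_(m, p)) x : vnorm (M *m x) <= specnorm M * vnorm x.
Proof.
have [->|nx0] := eqVneq x 0.
  by rewrite mulmx0 vnorm0 mulr_ge0 ?specnorm_ge0 ?vnorm_ge0.
have [u1 e] := normalize nx0; move: u1 e.
move: ((vnorm x)^-1%:C *: x) => y u1 ->.
rewrite -scalemxAr !vnormZ u1 mulr1 mulrC ler_wpM2r ?nc_ge0 //.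
by apply: (ub_le_sup (Sset_ub M)); exists y.
Qed.

Lemma specnorm_le m p (M : 'M[C]_(m, p)) c : 0 <= c ->
  (forall x, vnorm (M *m x) <= c * vnorm x) -> specnorm M <= c.
Proof.
move=> c0 H; rewrite /specnorm -/(unitS p) -/(Sset M).
have [ne|e] := pselect (Sset M !=set0).
  apply: ge_sup => // _ [x /= ux <-]; by rewrite -[c]mulr1 -ux.
have -> : Sset M = set0 by apply/eqP/negPn/negP => h; apply: e; exact/set0P.
by rewrite sup0.
Qed.

Lemma vnorm_col m p (a : 'cV[C]_m) (b : 'cV[C]_p) :
  vnorm (col_mx a b) ^+ 2 = vnorm a ^+ 2 + vnorm b ^+ 2.
Proof.
rewrite !vnorm_sqr big_split_ord /=; congr (_ + _); apply: eq_bigr => i _.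
  by rewrite col_mxEu.
by rewrite col_mxEd.
Qed.

Lemma pencil_bound n (A B : 'M[C]_n) a b :
  vnorm (A *m a + B *m b) <= pencil_norm A B * Num.sqrt (vnorm a ^+ 2 + vnorm b ^+ 2).
Proof.
rewrite -vnorm_col sqrtr_sqr ger0_norm ?vnorm_ge0 // -mul_row_col.
exact: specnorm_ub.
Qed.

Lemma pencil_norm_ge0 n (A B : 'M[C]_n) : 0 <= pencil_norm A B.
Proof. exact: specnorm_ge0. Qed.

Lemma iso_vnorm n k (U : 'M[C]_(n, k)) q : ctr U *m U = 1%:M -> vnorm (U *m q) = vnorm q.
Proof.
move=> hU; have : dot (U *m q) (U *m q) = dot q q by rewrite dot_mulmx mulmxA hU mul1mx.
rewrite !dot_self => /realC_inj /eqP; rewrite eqrXn2 ?vnorm_ge0 // => /eqP //.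
Qed.

Lemma iso_dot n k (U : 'M[C]_(n, k)) q r : ctr U *m U = 1%:M -> dot (U *m q) (U *m r) = dot q r.
Proof. by move=> hU; rewrite dot_mulmx mulmxA hU mul1mx. Qed.

End Lib3.

Arguments unitS {R} p.

Section Lib4.
Variable R : realType.
Local Notation C := (R[i]).
Local Notation nc := (@Normc.normc R).
Local Notation re := (@complex.Re R).
Local Notation im := (@complex.Im R).

Lemma TH_scalar (w1 D f12 f21 d12 d21 e e' a' b' : C) (t y rho : R) :
  D != 0 -> e' * e = 1 -> e * a' + e' * b' = rho%:C ->
  (1 - t) * y ^+ 2 + rho * y - t = 0 ->
  a' = (f12 - (w1 + t%:C * D) * d12) / D ->
  b' = (f21 - (w1 + t%:C * D) * d21) / D ->
  w1 + (y%:C * e) * f12 + (y%:C * e') * f21 + (y%:C * e') * (y%:C * e) * (w1 + D)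
  = (w1 + t%:C * D) * (1 + (y%:C * e) * d12 + (y%:C * e') * d21 + (y%:C * e') * (y%:C * e)).
Proof.
move=> D0 hee hs hq ha hb.
have hf12 : f12 = D * a' + (w1 + t%:C * D) * d12 by rewrite ha; field.
have hf21 : f21 = D * b' + (w1 + t%:C * D) * d21 by rewrite hb; field.
have hqC : (1 - t%:C) * y%:C ^+ 2 + rho%:C * y%:C - t%:C = 0.
  by rewrite -[1]/(1%:C) -!rmorphB -!rmorphXn -!rmorphM -rmorphD -rmorphB /= hq.
apply/eqP; rewrite -subr_eq0; apply/eqP.
transitivity (D * ((y%:C ^+ 2 * (e' * e)) * (1 - t%:C) + y%:C * (e * a' + e' * b') - t%:C)).
  rewrite hf12 hf21; ring.
have -> : y%:C ^+ 2 * (e' * e) * (1 - t%:C) + y%:C * (e * a' + e' * b') - t%:C = 0.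
  by rewrite hee hs -hqC; ring.
by rewrite mulr0.
Qed.

End Lib4.

Section Lib4b.
Variable R : realType.
Local Notation C := (R[i]).
Local Notation nc := (@Normc.normc R).
Local Notation re := (@complex.Re R).
Local Notation im := (@complex.Im R).

Lemma conj_real (z : C) : conjc z = z -> z = (re z)%:C.
Proof.
case: z => a b /= [h]; apply/eqP; rewrite eq_complex /= eqxx /=.
apply/eqP; lra.
Qed.

Lemma choose_phase (k : C) : exists e : C, conjc e * e = 1 /\ conjc (e * k) = e * k.
Proof.
have [->|k0] := eqVneq k 0.
  have c1 : conjc (1 : C) = 1 by exact: (conjcR 1).
  exists 1; rewrite mulr0 c1 mulr1; split => //; exact: (conjcR 0).
have nk : nc k != 0 by apply: contra k0 => /eqP /Normc.eq0_normc ->.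
have nkC : (nc k)%:C != 0 by rewrite eq_complex /= negb_and nk.
exists (conjc k / (nc k)%:C); split.
  rewrite conjcM conjcK' conjc_inv conjcR.
  have h := nc_sqr k; rewrite rmorphXn /= in h.
  transitivity (k * conjc k / ((nc k)%:C ^+ 2)); first by field.
  by rewrite h mulfV // -h expf_neq0.
have -> : conjc k / (nc k)%:C * k = (nc k)%:C.
  have h := nc_sqr k; rewrite rmorphXn /= in h.
  transitivity (k * conjc k / (nc k)%:C); first by field.
  by rewrite -h expr2 mulfK.
exact: conjcR.
Qed.

Lemma sigma_real (e a b : C) : conjc (e * (a - conjc b)) = e * (a - conjc b) ->
  conjc (e * a + conjc e * b) = e * a + conjc e * b.
Proof.
move=> h.
have cD : forall u v : C, conjc (u + v) = conjc u + conjc v by move=> [? ?] [? ?]; simpc.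
have cN : forall u : C, conjc (- u) = - conjc u by move=> [? ?]; simpc.
rewrite conjcM cD cN conjcK' in h.
rewrite cD !conjcM conjcK'.
apply/eqP; rewrite -subr_eq0; apply/eqP.
transitivity (- (e * (a - conjc b) - conjc e * (conjc a - b))); first ring.
by rewrite -h; ring.
Qed.

Lemma quad_root (t rho : R) : 0 < t < 1 ->
  exists y, 0 < y /\ (1 - t) * y ^+ 2 + rho * y - t = 0.
Proof.
move=> /andP[t0 t1].
set D := rho ^+ 2 + 4%:R * t * (1 - t).
have D0 : 0 <= D by rewrite /D; nra.
set s := Num.sqrt D.
have s2 : s ^+ 2 = D by rewrite sqr_sqrtr.
have s0 : 0 <= s by exact: sqrtr_ge0.
have srho : rho < s.
  have : rho ^+ 2 < s ^+ 2 by rewrite s2 /D; nra.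
  have [rn|rp] := ltP rho 0; first lra.
  by rewrite ltr_pXn2r // ?nnegrE.
exists ((s - rho) / (2%:R * (1 - t))); split.
  by apply: divr_gt0; lra.
have h1 : 2%:R * (1 - t) != 0 by apply/eqP; lra.
apply/eqP; rewrite -subr_eq0 subr0; apply/eqP.
have -> : (1 - t) * ((s - rho) / (2%:R * (1 - t))) ^+ 2 + rho * ((s - rho) / (2%:R * (1 - t))) - t
  = (s ^+ 2 - D) / (4%:R * (1 - t)).
  rewrite /D; field; lra.
by rewrite (_ : s ^+ 2 - D = 0) ?mul0r //; lra.
Qed.

End Lib4b.


Section Lib5.
Variable R : realType.
Local Notation C := (R[i]).
Local Notation nc := (@Normc.normc R).
Local Notation re := (@complex.Re R).
Local Notation im := (@complex.Im R).

Lemma conjcN' (z : C) : conjc (- z) = - conjc z.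
Proof. by case: z => a b; simpc. Qed.

Definition fT n (T : 'M[C]_n) x := dot x (T *m x).

Lemma dot_exp n (x y u v : 'cV[C]_n) c :
  dot (x + c *: y) (u + c *: v) =
  dot x u + c * dot x v + conjc c * dot y u + conjc c * c * dot y v.
Proof. rewrite dotDl !dotDr !dotZl !dotZr; ring. Qed.

Lemma fT_exp n (T : 'M[C]_n) x y c :
  fT T (x + c *: y) = fT T x + c * dot x (T *m y) + conjc c * dot y (T *m x)
    + conjc c * c * fT T y.
Proof. by rewrite /fT mulmxDr -scalemxAr dot_exp. Qed.

Lemma fTZ n (T : 'M[C]_n) x c : fT T (c *: x) = conjc c * c * fT T x.
Proof. by rewrite /fT -scalemxAr dotZl dotZr mulrA. Qed.

Lemma TH n (T : 'M[C]_n) x1 x2 (t : R) : vnorm x1 = 1 -> vnorm x2 = 1 -> 0 <= t <= 1 ->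
  exists x, vnorm x = 1 /\ fT T x = (1 - t)%:C * fT T x1 + t%:C * fT T x2.
Proof.
move=> u1 u2 /andP[t0 t1].
set w1 := fT T x1; set w2 := fT T x2.
have -> : (1 - t)%:C * w1 + t%:C * w2 = w1 + t%:C * (w2 - w1).
  by rewrite rmorphB rmorph1 /=; ring.
have d11 : dot x1 x1 = 1 by rewrite dot_self u1 expr1n.
have d22 : dot x2 x2 = 1 by rewrite dot_self u2 expr1n.
have [->|tn0] := eqVneq t 0.
  by exists x1; split => //; rewrite mul0r addr0.
have [->|tn1] := eqVneq t 1.
  by exists x2; split => //; rewrite mul1r addrC subrK.
have [ew|nw] := eqVneq w1 w2.
  by exists x1; split => //; rewrite ew subrr mulr0 addr0.
have tt : 0 < t < 1 by apply/andP; split; rewrite lt_neqAle ?t0 ?t1 ?andbT // eq_sym.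
set D := w2 - w1.
have D0 : D != 0 by rewrite subr_eq0 eq_sym.
set z0 := w1 + t%:C * D.
set a' := (dot x1 (T *m x2) - z0 * dot x1 x2) / D.
set b' := (dot x2 (T *m x1) - z0 * dot x2 x1) / D.
have [e [hee hek]] := choose_phase (a' - conjc b').
have hs := conj_real (sigma_real hek).
have [y [y0 hy]] := quad_root (re (e * a' + conjc e * b')) tt.
set c := y%:C * e.
have cc : conjc c = y%:C * conjc e by rewrite /c conjcM conjcR.
set q := x1 + c *: x2.
have hq : fT T q = z0 * dot q q.
  rewrite /q fT_exp dot_exp cc -/w1 -/w2 d11 d22 /c.
  have -> : w2 = w1 + D by rewrite /D addrC subrK.
  rewrite mulr1; exact: (TH_scalar (e' := conjc e) D0 hee hs hy).
have ccy : conjc c * c = y%:C ^+ 2 by rewrite cc /c mulrACA hee mulr1 expr2.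
have q0 : q != 0.
  apply/eqP => q0; move/eqP: nw; apply.
  have ex1 : x1 = (- c) *: x2 by rewrite scaleNr; apply/eqP; rewrite -subr_eq0 opprK -/q q0.
  have cN : conjc (- c) * (- c) = conjc c * c.
    by rewrite conjcN' mulrNN.
  have : dot x1 x1 = y%:C ^+ 2 by rewrite {1 2}ex1 dotZl dotZr mulrA cN ccy d22 mulr1.
  rewrite d11 => hy1.
  by rewrite /w1 ex1 fTZ cN ccy -hy1 mul1r.
have v0 : vnorm q != 0 by apply: contra q0 => /eqP /vnorm_eq0 ->.
have [uq eq] := normalize q0.
move: uq eq; set v := vnorm q; move: ((v)^-1%:C *: q) => q' uq eq.
exists q'; split => //.
move: hq; rewrite eq fTZ dot_self vnormZ uq conjcR mulr1 ncR.
rewrite ger0_norm ?vnorm_ge0 // -rmorphM /= => h.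
have vv0 : (v * v)%:C != 0 by rewrite eq_complex /= negb_and mulf_neq0.
apply: (mulfI vv0); rewrite h expr2 mulrC; done.
Qed.

End Lib5.


Section Lib6.
Variable R : realType.
Local Notation C := (R[i]).
Local Notation nc := (@Normc.normc R).
Local Notation re := (@complex.Re R).
Local Notation im := (@complex.Im R).

Lemma crawE n (A B : 'M[C]_n) :
  crawford A B = inf [set nc (fT (A + iC R *: B) x) | x in unitS n].
Proof.
rewrite /crawford; congr inf; apply: eq_imagel => x _.
by rewrite -mulmxA dotE.
Qed.

Lemma craw_lbset n (T : 'M[C]_n) : has_lbound [set nc (fT T x) | x in unitS n].
Proof. by exists 0 => _ [x _ <-]; exact: nc_ge0. Qed.

Lemma craw_le n (A B : 'M[C]_n) x : vnorm x = 1 ->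
  crawford A B <= nc (fT (A + iC R *: B) x).
Proof.
move=> ux; rewrite crawE; apply: (ge_inf (craw_lbset _)).
by exists x.
Qed.

Lemma craw_adh n (A B : 'M[C]_n) (x0 : 'cV[C]_n) d : vnorm x0 = 1 -> 0 < d ->
  exists2 x, vnorm x = 1 & nc (fT (A + iC R *: B) x) < crawford A B + d.
Proof.
move=> u0 d0; rewrite crawE.
have [_ [x ux <-] h] := inf_adherent d0 (conj (ex_intro _ _ (ex_intro2 _ _ x0 u0 erefl)) (craw_lbset (A + iC R *: B))).
by exists x.
Qed.

Lemma fT_bound n (T : 'M[C]_n) x : vnorm x = 1 -> nc (fT T x) <= frob T.
Proof.
move=> ux; apply: le_trans (CS _ _) _; rewrite ux mul1r.
by apply: le_trans (frob_bound _ _) _; rewrite ux mulr1.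
Qed.

Lemma ncJ (z : C) : nc (conjc z) = nc z.
Proof. by case: z => a b; rewrite /Normc.normc /= sqrrN. Qed.

Lemma eps_choice (g m : R) : 0 <= g -> 0 < m -> exists2 d, 0 < d & 2%:R * g * d + d ^+ 2 <= m.
Proof.
move=> g0 m0; exists (m / (2%:R * g + 1 + m)).
  by apply: divr_gt0 => //; lra.
set d := m / _.
have hd : d * (2%:R * g + 1 + m) = m by rewrite /d mulfVK //; apply/eqP; lra.
have d0 : 0 < d by apply: divr_gt0 => //; lra.
nra.
Qed.

Lemma real_ineq (g eta t del k p1 p2 f1 f2 : R) :
  0 < g -> 0 < eta -> 0 < t -> t * (4%:R * k ^+ 2) <= g * eta ->
  2%:R * g * del + del ^+ 2 <= t * g * eta ->
  g <= Num.sqrt (((1 - t) * p1 + t * f1) ^+ 2 + ((1 - t) * p2 + t * f2) ^+ 2) ->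
  Num.sqrt (p1 ^+ 2 + p2 ^+ 2) < g + del ->
  g <= Num.sqrt (p1 ^+ 2 + p2 ^+ 2) ->
  Num.sqrt (p1 ^+ 2 + p2 ^+ 2) <= k ->
  Num.sqrt (f1 ^+ 2 + f2 ^+ 2) <= k ->
  (g - eta) * Num.sqrt (p1 ^+ 2 + p2 ^+ 2) <= p1 * f1 + p2 * f2.
Proof.
move=> g0 e0 t0 htk hdel H1 H2 H3 H4 H5.
set P := Num.sqrt _ in H2 H3 H4 *.
have P2 : P ^+ 2 = p1 ^+ 2 + p2 ^+ 2 by rewrite sqr_sqrtr // addr_ge0 ?sqr_ge0.
have F2 : Num.sqrt (f1 ^+ 2 + f2 ^+ 2) ^+ 2 = f1 ^+ 2 + f2 ^+ 2 by rewrite sqr_sqrtr // addr_ge0 ?sqr_ge0.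
have Q2 : Num.sqrt (((1 - t) * p1 + t * f1) ^+ 2 + ((1 - t) * p2 + t * f2) ^+ 2) ^+ 2
   = ((1 - t) * p1 + t * f1) ^+ 2 + ((1 - t) * p2 + t * f2) ^+ 2.
  by rewrite sqr_sqrtr // addr_ge0 ?sqr_ge0.
have sq_le : forall a b : R, 0 <= a -> a <= b -> a ^+ 2 <= b ^+ 2 by move=> a b ha hb; nra.
have sq_lt : forall a b : R, 0 <= a -> a < b -> a ^+ 2 < b ^+ 2 by move=> a b ha hb; nra.
have hF : f1 ^+ 2 + f2 ^+ 2 <= k ^+ 2 by rewrite -F2; apply: sq_le => //; exact: sqrtr_ge0.
have hP : P ^+ 2 <= k ^+ 2 by apply: sq_le => //; exact: sqrtr_ge0.
have hQ : g ^+ 2 <= ((1 - t) * p1 + t * f1) ^+ 2 + ((1 - t) * p2 + t * f2) ^+ 2.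
  by rewrite -Q2; apply: sq_le => //; exact: ltW.
have hP2 : P ^+ 2 < g ^+ 2 + t * g * eta.
  have : P ^+ 2 < (g + del) ^+ 2 by apply: sq_lt => //; exact: sqrtr_ge0.
  lra.
set g' := p1 * f1 + p2 * f2.
have expand : ((1 - t) * p1 + t * f1) ^+ 2 + ((1 - t) * p2 + t * f2) ^+ 2
  = P ^+ 2 + 2%:R * t * (g' - P ^+ 2) + t ^+ 2 * ((f1 ^+ 2 + f2 ^+ 2) - 2%:R * g' + P ^+ 2).
  rewrite P2 /g'; ring.
have hfp : (f1 ^+ 2 + f2 ^+ 2) - 2%:R * g' + P ^+ 2 <= 4%:R * k ^+ 2.
  rewrite P2 /g'; rewrite P2 in hP.
  have := sqr_ge0 (f1 + p1); have := sqr_ge0 (f2 + p2); nra.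
have hg : P ^+ 2 - g * eta <= g'.
  have h1 : - (t * g * eta) < 2%:R * t * (g' - P ^+ 2) + t ^+ 2 * ((f1 ^+ 2 + f2 ^+ 2) - 2%:R * g' + P ^+ 2).
    lra.
  have h2 : t ^+ 2 * ((f1 ^+ 2 + f2 ^+ 2) - 2%:R * g' + P ^+ 2) <= t * (g * eta).
    rewrite expr2 -mulrA ler_pM2l //; apply: le_trans htk; rewrite ler_pM2l //.
  have h3 : - (t * g * eta) < 2%:R * t * (g' - P ^+ 2) + t * (g * eta) by lra.
  have h4 : 0 < t * (2%:R * (g' - P ^+ 2) + 2%:R * g * eta) by lra.
  rewrite pmulr_rgt0 // in h4; lra.
nra.
Qed.

End Lib6.


Section Lib7.
Variable R : realType.
Local Notation C := (R[i]).
Local Notation nc := (@Normc.normc R).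
Local Notation re := (@complex.Re R).
Local Notation im := (@complex.Im R).

Lemma nc_comb (a b p1 p2 f1 f2 : R) :
  nc (a%:C * (p1 +i* p2) + b%:C * (f1 +i* f2)) =
  Num.sqrt ((a * p1 + b * f1) ^+ 2 + (a * p2 + b * f2) ^+ 2).
Proof. rewrite /Normc.normc /=; congr Num.sqrt; ring. Qed.

Lemma re_rot (p1 p2 f1 f2 P : R) :
  re (conjc (p1 +i* p2) * (P^-1)%:C * (f1 +i* f2)) = (p1 * f1 + p2 * f2) / P.
Proof. rewrite /=; ring. Qed.

Lemma re_scale (a : R) (z : C) : re (z * a%:C) = re z * a.
Proof. case: z => x y /=; ring. Qed.

Lemma fT0 n (T : 'M[C]_n) : fT T 0 = 0.
Proof. by rewrite /fT /dot big1 // => i _; rewrite mxE conjcR mul0r. Qed.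

Lemma rotation n (A B : 'M[C]_n) (x0 : 'cV[C]_n) eta :
  vnorm x0 = 1 -> 0 < crawford A B -> 0 < eta ->
  exists w : C, nc w = 1 /\
    forall x, (crawford A B - eta) * vnorm x ^+ 2 <= re (w * fT (A + iC R *: B) x).
Proof.
move=> u0 g0 e0.
set T := A + iC R *: B; set g := crawford A B; set k := frob T.
have k0 : 0 <= k by exact: frob_ge0.
set t := g * eta / (4%:R * k ^+ 2 + g * eta).
have ge0 : 0 < g * eta by exact: mulr_gt0.
have den0 : 0 < 4%:R * k ^+ 2 + g * eta by have := sqr_ge0 k; lra.
have t0 : 0 < t by exact: divr_gt0.
have tk : t * (4%:R * k ^+ 2) <= g * eta.
  rewrite /t mulrAC ler_pdivrMr // ler_pM2l //; have := sqr_ge0 k; lra.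
have t1 : t <= 1 by rewrite /t ler_pdivrMr // mul1r; have := sqr_ge0 k; lra.
have [del del0 hdel] := eps_choice (ltW g0) (mulr_gt0 t0 ge0).
have [x1 u1 hx1] := craw_adh A B u0 del0.
move: hx1 (craw_le A B u1) (fT_bound T u1); rewrite -/T -/g -/k.
have hTH := @TH R n T x1.
move: (fT T x1) hTH => p hTH hp1 hp2 hp3.
set P := nc p.
have P0 : 0 < P by apply: lt_le_trans hp2.
exists (conjc p * (P^-1)%:C); split.
  rewrite Normc.normcM ncJ ncR -/P ger0_norm ?invr_ge0 ?(ltW P0) // mulfV //.
  exact: lt0r_neq0.
have unit_case : forall x, vnorm x = 1 -> g - eta <= re (conjc p * (P^-1)%:C * fT T x).
  move=> x ux.
  have [x' [ux' hx']] := hTH x t u1 ux (introT andP (conj (ltW t0) t1)).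
  have hgx' := craw_le A B ux'; rewrite -/T -/g hx' in hgx'; clear hx'.
  have hf := fT_bound T ux; rewrite -/k in hf.
  move: (fT T x) hgx' hf => f hgx' hf.
  move: hp1 hp2 hp3 hgx' hf; rewrite /P.
  case: p {hTH P P0} => p1 p2; case: f => f1 f2.
  rewrite nc_comb re_rot /Normc.normc => hp1 hp2 hp3 hgx' hf.
  have Ppos : 0 < Num.sqrt (p1 ^+ 2 + p2 ^+ 2) by apply: lt_le_trans hp2.
  rewrite ler_pdivlMr //.
  apply: (real_ineq g0 e0 t0 tk _ hgx' hp1 hp2 hp3 hf).
  by move: hdel; rewrite /g mulrA.
move=> x.
have [->|x0n] := eqVneq x 0.
  by rewrite vnorm0 expr0n /= mulr0 fT0 mulr0.
have [ux ex] := normalize x0n.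
move: ux ex; set v := vnorm x; move: ((v)^-1%:C *: x) => x' ux ->.
rewrite fTZ conjcR -rmorphM /= [_ * fT T x']mulrC [in X in _ <= X]mulrA re_scale -expr2.
apply: ler_wpM2r; first exact: sqr_ge0.
exact: unit_case.
Qed.

End Lib7.


Section Lib8.
Variable R : realType.
Local Notation C := (R[i]).
Local Notation nc := (@Normc.normc R).
Local Notation re := (@complex.Re R).
Local Notation im := (@complex.Im R).

Lemma herm_real n (A : 'M[C]_n) (x : 'cV[C]_n) : Defs.hermitian A -> conjc (fT A x) = fT A x.
Proof.
move=> hA; rewrite /fT -dotC.
by rewrite -{2}hA dot_mulmx ctrK.
Qed.

Lemma fT_pencil n (A B : 'M[C]_n) (x : 'cV[C]_n) : fT (A + iC R *: B) x = fT A x + iC R * fT B x.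
Proof. by rewrite /fT mulmxDl -scalemxAl dotDr dotZr. Qed.

Definition rotG n (w : C) (A B : 'M[C]_n) := (re w)%:C *: A - (im w)%:C *: B.

Lemma fT_rotG n (w : C) (A B : 'M[C]_n) (x : 'cV[C]_n) : Defs.hermitian A -> Defs.hermitian B ->
  fT (rotG w A B) x = (re (w * fT (A + iC R *: B) x))%:C.
Proof.
move=> hA hB; rewrite fT_pencil.
have ha := conj_real (herm_real x hA); have hb := conj_real (herm_real x hB).
have -> : fT (rotG w A B) x = (re w)%:C * fT A x - (im w)%:C * fT B x.
  by rewrite /fT /rotG mulmxBl -!scalemxAl dotBr !dotZr.
rewrite ha hb; case: w => w1 w2; rewrite /iC /=.
apply/eqP; rewrite eq_complex /=; apply/andP; split; apply/eqP; ring.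
Qed.

Lemma ctr1 n : ctr (1%:M : 'M[C]_n) = 1%:M.
Proof.
apply/matrixP => i j; rewrite !mxE [i == j]eq_sym; case: (j == i).
  by rewrite !mulr1n; exact: (conjcR 1).
by rewrite !mulr0n; exact: (conjcR 0).
Qed.

Lemma herm_rotG n (w : C) (A B : 'M[C]_n) : Defs.hermitian A -> Defs.hermitian B -> Defs.hermitian (rotG w A B).
Proof.
by move=> hA hB; rewrite /Defs.hermitian /rotG ctrD ctrN !ctrZ !conjcR hA hB.
Qed.

Lemma rotG_bound n (w : C) (A B : 'M[C]_n) y : nc w = 1 ->
  vnorm (rotG w A B *m y) <= pencil_norm A B * vnorm y.
Proof.
move=> w1.
have -> : rotG w A B *m y = A *m ((re w)%:C *: y) + B *m ((- im w)%:C *: y).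
  by rewrite /rotG mulmxBl -!scalemxAl -!scalemxAr rmorphN /= scaleNr.
apply: le_trans (pencil_bound _ _ _ _) _.
rewrite !vnormZ !ncR !exprMn !real_normK ?num_real // -mulrDl.
have -> : (re w) ^+ 2 + (- im w) ^+ 2 = 1.
  move: w1; case: w => a b; rewrite /Normc.normc /= sqrrN => h.
  by rewrite -[LHS]sqr_sqrtr ?addr_ge0 ?sqr_ge0 // h expr1n.
by rewrite mul1r sqrtr_sqr ger0_norm ?vnorm_ge0.
Qed.

Lemma outer_mul n (w v : 'cV[C]_n) : (w *m ctr w) *m v = dot w v *: w.
Proof.
rewrite -mulmxA.
have -> : ctr w *m v = (dot w v)%:M.
  by apply/matrixP => i j; rewrite (ord1 i) (ord1 j) dotE mxE eqxx mulr1n.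
by rewrite mul_mx_scalar.
Qed.

Lemma specnorm0 m p : specnorm (0 : 'M[C]_(m, p)) <= 0.
Proof. by apply: specnorm_le => // x; rewrite mul0mx vnorm0 mul0r. Qed.

Lemma householder n (x r : 'cV[C]_n) : vnorm x = 1 -> conjc (dot x r) = dot x r ->
  exists E : 'M[C]_n, [/\ Defs.hermitian E, E *m x = r & specnorm E <= vnorm r].
Proof.
move=> ux hr.
have [->|r0] := eqVneq r 0.
  exists 0; split; rewrite ?mul0mx ?vnorm0 ?specnorm0 //.
  by rewrite /Defs.hermitian; apply/matrixP => i j; rewrite !mxE; exact: (conjcR 0).
have [uy ey] := normalize r0.
move: uy ey; set rho := vnorm r; move: ((rho)^-1%:C *: r) => y uy ey.
have rho0 : 0 < rho by rewrite lt_neqAle vnorm_ge0 andbT eq_sym; apply: contra r0 => /eqP/vnorm_eq0 ->.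
have hxy : conjc (dot x y) = dot x y.
  move: hr; rewrite ey dotZr conjcM conjcR => h.
  have rC : rho%:C != 0 by rewrite eq_complex /= negb_and gt_eqF.
  by apply: (mulfI rC).
have dxx : dot x x = 1 by rewrite dot_self ux expr1n.
have dyy : dot y y = 1 by rewrite dot_self uy expr1n.
have [exy|nxy] := eqVneq y x.
  exists (rho%:C *: 1%:M); split.
  - by rewrite /Defs.hermitian ctrZ ctr1 conjcR.
  - by rewrite -scalemxAl mul1mx ey exy.
  - apply: specnorm_le; first exact: vnorm_ge0.
    by move=> v; rewrite -scalemxAl mul1mx vnormZ ncR ger0_norm ?vnorm_ge0.
set w := x - y.
have w0 : w != 0 by rewrite subr_eq0 eq_sym.
set sg := vnorm w ^+ 2.
have sg0 : 0 < sg by rewrite exprn_gt0 // lt_neqAle vnorm_ge0 andbT eq_sym; apply: contra w0 => /eqP/vnorm_eq0 ->.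
have sgC : sg%:C = 2%:R * (1 - dot x y).
  rewrite -dot_self /w dotBl !dotBr dxx dyy -hxy -dotC; ring.
have dwx : dot w x = 1 - dot x y by rewrite /w dotBl dxx -hxy -dotC.
set c := (2%:R / sg)%:C.
set H := 1%:M - c *: (w *m ctr w).
have Hv : forall v, H *m v = v - (c * dot w v) *: w.
  by move=> v; rewrite /H mulmxBl mul1mx -scalemxAl outer_mul scalerA.
have csg : c * sg%:C = 2%:R by rewrite /c -rmorphM /= mulfVK ?gt_eqF // rmorphMn rmorph1.
have Hx : H *m x = y.
  rewrite Hv dwx.
  have h2 : (2%:R : C) != 0 by rewrite pnatr_eq0.
  have e1 : 1 - dot x y = sg%:C / 2%:R by rewrite sgC; field.
  have -> : c * (1 - dot x y) = 1 by rewrite e1 mulrA csg mulfV.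
  by rewrite scale1r /w opprB addrC subrK.
have cR : conjc c = c by rewrite /c conjcR.
have Hiso : forall v, vnorm (H *m v) = vnorm v.
  move=> v; have : dot (H *m v) (H *m v) = dot v v.
    rewrite Hv dotBl !dotBr !dotZl !dotZr conjcM cR (dotC w v) (dot_self w) -/sg.
    set al := dot w v.
    transitivity (dot v v + al * conjc al * c * (c * sg%:C - 2%:R)); first ring.
    by rewrite csg subrr mulr0 addr0.
  rewrite !dot_self => /realC_inj /eqP; rewrite eqrXn2 ?vnorm_ge0 // => /eqP //.
exists (rho%:C *: H); split.
- rewrite /Defs.hermitian ctrZ conjcR /H ctrD ctrN ctrZ cR ctr_mul ctrK ctr1 //.
- by rewrite -scalemxAl Hx ey.
- apply: specnorm_le; first exact: vnorm_ge0.
  by move=> v; rewrite -scalemxAl vnormZ ncR ger0_norm ?vnorm_ge0 // Hiso.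
Qed.

End Lib8.


Section Lib9.
Variable R : realType.
Local Notation C := (R[i]).
Local Notation nc := (@Normc.normc R).
Local Notation re := (@complex.Re R).
Local Notation im := (@complex.Im R).

Lemma coercive_unit k (H : 'M[C]_k) m : 0 < m ->
  (forall q, m * vnorm q <= vnorm (H *m q)) -> H \in unitmx.
Proof.
move=> m0 hH; rewrite unitmxE unitfE -det_tr; apply/negP => /det0P [v v0 hv].
have : H *m v^T = 0 by rewrite -[H]trmxK -trmx_mul hv trmx0.
move=> h; have := hH v^T; rewrite h vnorm0 => h2.
have : vnorm v^T = 0.
  apply/eqP; rewrite eq_le vnorm_ge0 andbT.
  by rewrite -(pmulr_rle0 _ m0).
move/vnorm_eq0 => /eqP; rewrite -trmx0 (inj_eq trmx_inj) => /eqP v0'.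
by rewrite v0' eqxx in v0.
Qed.

Lemma rank_step n k (A B : 'M[C]_n) (U : 'M[C]_(n, k)) (a b : C) :
  (\rank (row_mx (A *m U) (B *m U)) <= \rank U)%N ->
  ctr U *m ((a *: A - b *: B) *m U) \in unitmx ->
  exists D1 D2, A *m U = ((a *: A - b *: B) *m U) *m D1 /\ B *m U = ((a *: A - b *: B) *m U) *m D2.
Proof.
move=> hr hu.
set S := (a *: A - b *: B) *m U.
set M := (row_mx (A *m U) (B *m U))^T.
have eS : S = row_mx (A *m U) (B *m U) *m col_mx (a%:M) ((- b)%:M).
  by rewrite mul_row_col !mul_mx_scalar /S mulmxBl -!scalemxAl scaleNr.
have sub1 : (S^T <= M)%MS by rewrite eS trmx_mul submxMl.
have rk : (\rank M <= \rank S^T)%N.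
  rewrite mxrank_tr /M mxrank_tr.
  apply: leq_trans hr _; apply: leq_trans (rank_leq_col U) _.
  have := mxrankM_maxr (ctr U) S; rewrite mxrank_unit //.
have sub2 : (M <= S^T)%MS.
  have [h1 h2] := mxrank_leqif_sup sub1.
  by rewrite -h2 eqn_leq h1 rk.
have [sA sB] : ((A *m U)^T <= S^T)%MS /\ ((B *m U)^T <= S^T)%MS.
  have := submx_trans (submx_refl M) sub2; rewrite /M tr_row_mx col_mx_sub.
  by case/andP.
case/submxP: sA => D1 h1; case/submxP: sB => D2 h2; exists D1^T, D2^T; split.
  by apply: trmx_inj; rewrite h1 [RHS]trmx_mul trmxK.
by apply: trmx_inj; rewrite h2 [RHS]trmx_mul trmxK.
Qed.

End Lib9.


Unset Implicit Arguments.
Local Close Scope complex_scope.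
Local Notation re := (@complex.Re _).

Lemma const_bound (R : realType) (g N : R) : 0 < g -> 0 <= N ->
  0 < g - g ^+ 2 / (2%:R * g + N) /\ N / (g - g ^+ 2 / (2%:R * g + N)) <= 1 + N / g.
Proof.
move=> g0 N0.
have d0 : 0 < 2%:R * g + N by lra.
have hm : g - g ^+ 2 / (2%:R * g + N) = g * (g + N) / (2%:R * g + N).
  by field; apply/eqP; lra.
rewrite hm; have m0 : 0 < g * (g + N) / (2%:R * g + N).
  by apply: divr_gt0 => //; apply: mulr_gt0; lra.
split => //.
rewrite ler_pdivrMr //.
have -> : (1 + N / g) * (g * (g + N) / (2%:R * g + N)) = (g + N) ^+ 2 / (2%:R * g + N).
  by field; apply/andP; split; apply/eqP; lra.
rewrite ler_pdivlMr //; nra.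
Qed.

Lemma main_aux (R : realType) (n k : nat) (A B : 'M[R[i]]_n) (U : 'M[R[i]]_(n, k)) :
  definite_pencil A B ->
  ctr U *m U = 1%:M ->
  right_deflating_span A B U ->
  forall eps eps' : R, 0 < eps -> 0 < eps' ->
  eps' <= eps * (1 + pencil_norm A B / crawford A B)^-1 ->
  sym_pseudospec eps' (ctr U *m A *m U) (ctr U *m B *m U) `<=` sym_pseudospec eps A B.
Proof.
move=> [hA hB g0] hU hdef eps eps' e0 e1 heps z [u [E' [F' [u0 hE' hF' hnorm heq]]]].
set N := pencil_norm A B; set g := crawford A B.
have N0 : 0 <= N by exact: pencil_norm_ge0.
have [uu eu] := normalize u0.
move: uu eu; set vu := vnorm u; move: (((vu)^-1%:C)%C *: u) => u1 uu1 eu.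
have heq1 : (ctr U *m A *m U + E') *m u1 = z *: ((ctr U *m B *m U + F') *m u1).
  have vu0 : ((vu%:C)%C : R[i]) != 0.
    rewrite eq_complex /= negb_and; apply/orP; left.
    by apply: contra u0 => /eqP/vnorm_eq0 ->.
  move: heq; rewrite eu -!scalemxAr scalerA mulrC -scalerA => /(scalerI vu0).
  done.
set x := U *m u1.
have ux : vnorm x = 1 by rewrite /x iso_vnorm.
set eta := g ^+ 2 / (2%:R * g + N).
have eta0 : 0 < eta by apply: divr_gt0; [exact: exprn_gt0 | lra].
have [m0 cb] := @const_bound R g N g0 N0; rewrite -/g -/eta in m0 cb.
set m := g - eta in m0 cb.
have [w [w1 hw]] := rotation ux g0 eta0.
set G := rotG w A B; set S := G *m U; set H := ctr U *m S.
have hcoer : forall q, m * vnorm q <= vnorm (H *m q).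
  move=> q.
  have e2 : dot q (H *m q) = ((re (w * fT (A + iC R *: B) (U *m q)))%:C)%C.
    by rewrite /H /S -!mulmxA dot_mulmx ctrK -fT_rotG.
  have h1 := hw (U *m q); rewrite iso_vnorm // in h1.
  have h2 := Re_dot_le q (H *m q); rewrite e2 /= in h2.
  have [q0|qn0] := eqVneq (vnorm q) 0; first by rewrite q0 mulr0 vnorm_ge0.
  have qp : 0 < vnorm q by rewrite lt_neqAle eq_sym qn0 vnorm_ge0.
  rewrite -(ler_pM2r qp) -mulrA -expr2 [vnorm (H *m q) * _]mulrC.
  exact: le_trans h1 h2.
have hunit : H \in unitmx by exact: coercive_unit m0 hcoer.
have [D1 [D2 [hD1 hD2]]] := rank_step hdef hunit.
rewrite -/G -/S in hD1 hD2.
set L := S *m invmx H.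
have hL1 : ctr U *m L = 1%:M by rewrite /L mulmxA -/H mulmxV.
have hLA : A *m U = L *m (ctr U *m A *m U).
  rewrite -mulmxA hD1 /L.
  have -> : ctr U *m (S *m D1) = H *m D1 by rewrite /H mulmxA.
  by rewrite -mulmxA (mulmxA (invmx H)) mulVmx // mul1mx.
have hLB : B *m U = L *m (ctr U *m B *m U).
  rewrite -mulmxA hD2 /L.
  have -> : ctr U *m (S *m D2) = H *m D2 by rewrite /H mulmxA.
  by rewrite -mulmxA (mulmxA (invmx H)) mulVmx // mul1mx.
have hLb : forall v, vnorm (L *m v) <= N / m * vnorm v.
  move=> v; set q := invmx H *m v.
  have Hq : H *m q = v by rewrite /q mulmxA mulmxV // mul1mx.
  have := hcoer q; rewrite Hq => hq.
  rewrite /L -mulmxA -/q /S -mulmxA.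
  apply: le_trans (rotG_bound _ _ _ w1) _; rewrite iso_vnorm // -/N.
  rewrite mulrAC ler_pdivlMr // -mulrA ler_wpM2l // mulrC //.
have hxr : forall (E0 : 'M[R[i]]_k), Defs.hermitian E0 ->
    conjc (dot x (L *m (E0 *m u1))) = dot x (L *m (E0 *m u1)).
  move=> E0 hE0; rewrite /x -{1 2}(ctrK U) -!dot_mulmx (mulmxA (ctr U)) hL1 mul1mx.
  exact: herm_real.
have [E [hE hEx hEn]] := householder ux (hxr E' hE').
have [F [hF hFx hFn]] := householder ux (hxr F' hF').
exists x, E, F; split.
- apply/eqP => hx; move: ux; rewrite hx vnorm0 => h.
  by move: (@oner_neq0 R); rewrite -h eqxx.
- exact: hE.
- exact: hF.
- have c0 : 0 <= N / m by apply: divr_ge0 => //; exact: ltW.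
  have bE : specnorm E <= N / m * specnorm E'.
    apply: le_trans hEn _; apply: le_trans (hLb _) _; apply: ler_wpM2l => //.
    by apply: le_trans (specnorm_ub _ _) _; rewrite uu1 mulr1.
  have bF : specnorm F <= N / m * specnorm F'.
    apply: le_trans hFn _; apply: le_trans (hLb _) _; apply: ler_wpM2l => //.
    by apply: le_trans (specnorm_ub _ _) _; rewrite uu1 mulr1.
  have sE0 := specnorm_ge0 E; have sF0 := specnorm_ge0 F.
  have sE0' := specnorm_ge0 E'; have sF0' := specnorm_ge0 F'.
  have : Num.sqrt (specnorm E ^+ 2 + specnorm F ^+ 2) <=
         N / m * Num.sqrt (specnorm E' ^+ 2 + specnorm F' ^+ 2).
    rewrite -(ger0_norm c0) -sqrtr_sqr -sqrtrM ?sqr_ge0 //; apply: ler_wsqrtr.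
    have sq_le : forall a b : R, 0 <= a -> a <= b -> a ^+ 2 <= b ^+ 2 by move=> a b ha hb; nra.
    by rewrite mulrDr -!exprMn; apply: lerD; apply: sq_le.
  move=> h; apply: le_trans h _.
  have g1 : 0 < 1 + N / g by have := divr_ge0 N0 (ltW g0); lra.
  move: heps; rewrite ler_pdivlMr // => heps.
  apply: le_trans heps; rewrite mulrC; apply: ler_pM => //.
  exact: sqrtr_ge0.
- rewrite mulmxDl mulmxDl hEx hFx /x !mulmxA hLA hLB.
  rewrite -(mulmxA L (ctr U *m A *m U)) -(mulmxA L E') -mulmxDr -mulmxDl heq1.
  rewrite -(mulmxA L (ctr U *m B *m U)) -(mulmxA L F') -mulmxDr -mulmxDl.
  by rewrite -scalemxAr.
Qed.


End PencilAux.
Import PencilAux.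

Theorem lemma4p1 (R : realType) (n k : nat) (A B : 'M[R[i]]_n) (U : 'M[R[i]]_(n, k)) :
  definite_pencil A B ->
  ctr U *m U = 1%:M ->
  right_deflating_span A B U ->
  forall eps eps' : R, 0 < eps -> 0 < eps' ->
  eps' <= eps * (1 + pencil_norm A B / crawford A B)^-1 ->
  sym_pseudospec eps' (ctr U *m A *m U) (ctr U *m B *m U) `<=` sym_pseudospec eps A B.
Proof. exact: PencilAux.main_aux. Qed.
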